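(* Consider any instance of the rescheduling problem $(1, h_1 \mid \Delta_{\max}\le k \mid \mu\Delta_{\max} + \sum_{j=1}^n w_j C_j)$ described in the context, and let $\sigma^*$ be an optimal schedule with the following properties: the jobs of its earlier schedule are processed in increasing index order; the jobs of its later schedule are processed in increasing index order; $C_j(\sigma^* )\le C_j(\pi^* )$ for every earlier-schedule job; the earlier schedule has at most one idle period; every earlier-schedule job processed after the idle period satisfies $C_j(\pi^* )-C_j(\sigma^* )=\Delta_{\max}(\sigma^* )$; those jobs have consecutive indices; the first of them, $J_j$, satisfies $S_j(\pi^* )\ge T_2$; the machine does not idle in the later schedule; and the first job of the later schedule has maximum time deviation among later-schedule jobs. Suppose $J_a$ is the first job in the later schedule of $\sigma^*$. Then for every index $j>a$ with $S_j(\pi^* )<T_2$, if $J_j$ is in the earlier schedule of $\sigma^*$ then $\Delta_j<\Delta_a$.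
   Context: An instance consists of $n$ jobs $J_1,\dots,J_n$, where $J_j$ has a positive integer processing time $p_j$ and positive integer weight $w_j$, indexed so that $p_1/w_1\le\cdots\le p_n/w_n$; integers $0\le T_1<T_2$ (machine unavailable during $[T_1,T_2]$); an integer $k$; a rational $\mu\ge0$. The original schedule $\pi^*$ processes $J_1,\dots,J_n$ in order consecutively from time $0$ without idling, so $S_j(\pi^* )=\sum_{i<j}p_i$, $C_j(\pi^* )=\sum_{i\le j}p_i$. A schedule $\sigma$ gives start times $S_j(\sigma)\ge0$, non-preemptive single-machine processing, $C_j(\sigma)=S_j(\sigma)+p_j$, no overlaps, and each job has $C_j(\sigma)\le T_1$ or $S_j(\sigma)\ge T_2$. $\Delta_j=|C_j(\sigma)-C_j(\pi^* )|$ (for $\sigma=\sigma^*$), $\Delta_{\max}=\max_j\Delta_j$. Feasible means $\Delta_{\max}\le k$; optimal means feasible minimizing $\mu\Delta_{\max}+\sum_j w_jC_j(\sigma)$. The earlier schedule consists of jobs with $C_j(\sigma)\le T_1$; the later schedule of jobs completed after $T_2$. An idle period of the earlier schedule is a maximal interval of positive length within $[0,c]$ ($c$ the largest completion time of an earlier job) with no processing; the machine idles in the later schedule if some positive-length interval within $[T_2,c']$ ($c'$ the largest completion time of a later job) has no processing. Standing assumptions: some job has $C_j(\pi^* )>T_1$; with $j_1$ the smallest such index, $\min_jp_j\le T_1<\sum_jp_j$ and $T_2-S_{j_1}(\pi^* )\le k$. *)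

(* Defs.v *)
(* Rescheduling on a single machine with one unavailability
   interval [T1,T2]; jobs indexed by 'I_n (0-based, J_{j+1} in the paper is
   index j here). Times are rationals. *)
From mathcomp Require Import all_boot all_order all_algebra.
Set Implicit Arguments. Unset Strict Implicit. Unset Printing Implicit Defensive.
Import Order.TTheory GRing.Theory Num.Theory.
Local Open Scope ring_scope.

Section Resched.
Variables (n : nat) (p w : 'I_n -> nat) (T1 T2 : nat) (k : int) (mu : rat).

Definition Spi (j : 'I_n) : rat := (\sum_(i < n | (i < j)%N) p i)%:R.
Definition Cpi (j : 'I_n) : rat := (\sum_(i < n | (i <= j)%N) p i)%:R.

Definition sched := 'I_n -> rat.

Definition C (S : sched) (j : 'I_n) : rat := S j + (p j)%:R.

Definition is_schedule (S : sched) : Prop :=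
  [/\ forall j, 0 <= S j,
      forall i j, i != j -> C S i <= S j \/ C S j <= S i
    & forall j, C S j <= T1%:R \/ T2%:R <= S j].

Definition Delta (S : sched) (j : 'I_n) : rat := `|C S j - Cpi j|.
Definition Dmax (S : sched) : rat := \big[Num.max/0]_(j < n) Delta S j.

Definition feasible (S : sched) : Prop :=
  is_schedule S /\ forall j, Delta S j <= k%:~R.

Definition objective (S : sched) : rat :=
  mu * Dmax S + \sum_(j < n) (w j)%:R * C S j.

Definition optimal (S : sched) : Prop :=
  feasible S /\ forall S', feasible S' -> objective S <= objective S'.

Definition earlier (S : sched) (j : 'I_n) : Prop := C S j <= T1%:R.
Definition later (S : sched) (j : 'I_n) : Prop := T2%:R < C S j.

Definition processing (S : sched) (t : rat) : Prop :=
  exists j, S j < t < C S j.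

(* largest completion time of an earlier (resp. later) job; 0 if none *)
Definition c_earlier (S : sched) : rat :=
  \big[Num.max/0]_(j < n | C S j <= T1%:R) C S j.
Definition c_later (S : sched) : rat :=
  \big[Num.max/0]_(j < n | T2%:R < C S j) C S j.

Definition idle_interval (S : sched) (a b : rat) : Prop :=
  [/\ 0 <= a, a < b, b <= c_earlier S
    & forall t, a < t < b -> ~ processing S t].

Definition idle_period (S : sched) (a b : rat) : Prop :=
  idle_interval S a b /\
  forall a' b', a' <= a -> b <= b' -> idle_interval S a' b' -> a' = a /\ b' = b.

Definition at_most_one_idle_period (S : sched) : Prop :=
  forall a b a' b', idle_period S a b -> idle_period S a' b' -> a = a' /\ b = b'.

Definition after_idle (S : sched) (b : rat) (j : 'I_n) : Prop :=
  earlier S j /\ b <= S j.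

Definition no_idle_later (S : sched) : Prop :=
  ~ exists u v, [/\ T2%:R <= u, u < v, v <= c_later S
                  & forall t, u < t < v -> ~ processing S t].

Definition first_later (S : sched) (a : 'I_n) : Prop :=
  later S a /\ forall i, later S i -> S a <= S i.

Definition good_optimal (S : sched) : Prop :=
  optimal S /\
  (forall i j, earlier S i -> earlier S j -> (i < j)%N -> S i < S j) /\
  (forall i j, later S i -> later S j -> (i < j)%N -> S i < S j) /\
  (forall j, earlier S j -> C S j <= Cpi j) /\
  at_most_one_idle_period S /\
  (forall a b, idle_period S a b ->
     [/\ (forall j, after_idle S b j -> Cpi j - C S j = Dmax S),
         (forall i j l : 'I_n, after_idle S b i -> after_idle S b j ->
             (i <= l <= j)%N -> after_idle S b l)
       & (forall j, after_idle S b j ->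
             (forall i, after_idle S b i -> S j <= S i) ->
             T2%:R <= Spi j)]) /\
  no_idle_later S /\
  (forall a, first_later S a -> forall i, later S i -> Delta S i <= Delta S a).

Definition instance_ok : Prop :=
  (forall j, 0 < p j)%N /\ (forall j, 0 < w j)%N /\
  (* p_i/w_i nondecreasing in the index *)
  (forall i j : 'I_n, (i <= j)%N -> (p i * w j <= p j * w i)%N) /\
  (T1 < T2)%N /\ 0 <= mu /\
  exists j1 : 'I_n,
    T1%:R < Cpi j1 /\
    (forall j, T1%:R < Cpi j -> (j1 <= j)%N) /\
    (exists j, (p j <= T1)%N) /\
    (T1 < \sum_(j < n) p j)%N /\
    T2%:R - Spi j1 <= k%:~R.

End Resched.

(* Main.v *)
Require Import Defs.
From mathcomp Require Import all_boot all_order all_algebra.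
From mathcomp Require Import zify ring lra.
Import Order.TTheory GRing.Theory Num.Theory.
Local Open Scope ring_scope.

Lemma sum_le_split n (p : 'I_n -> nat) (j : 'I_n) :
  (\sum_(i < n | (i <= j)%N) p i = \sum_(i < n | (i < j)%N) p i + p j)%N.
Proof.
rewrite (bigD1 j) //= addnC; congr (_ + _)%N.
by apply: eq_bigl => i; rewrite ltn_neqAle andbC.
Qed.

Lemma main_sum n (p : 'I_n -> nat) (T1 : nat) (S : 'I_n -> rat) :
  (forall j, 0 <= S j) ->
  (forall i j, i != j -> C p S i <= S j \/ C p S j <= S i) ->
  (forall i j, C p S i <= T1%:R -> C p S j <= T1%:R -> (i < j)%N -> S i < S j) ->
  forall m (j : 'I_n), C p S j <= T1%:R -> (m <= j)%N ->
  (\sum_(i < n | (i < m)%N && (C p S i <= T1%:R)) p i)%:R <= S j.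
Proof.
move=> H0 Hov Hord; elim=> [|m IH] j ej hm.
  by rewrite big_pred0 //.
rewrite (bigID (fun i : 'I_n => (i < m)%N)) /=.
rewrite (eq_bigl (fun i : 'I_n => (i < m)%N && (C p S i <= T1%:R))); last first.
  move=> i; case: (ltnP i m) => h; rewrite ?andbT ?andbF //=.
  by rewrite (ltn_trans h (ltnSn m)).
case: (ltnP m n) => hmn; last first.
  rewrite [X in (_ + X)%N]big_pred0 ?addn0; first by apply: IH => //; lia.
  move=> i /=; case: (ltnP i m) => h; rewrite ?andbF //.
  have := ltn_ord i; lia.
set o := Ordinal hmn.
case eo: (C p S o <= T1%:R).
  rewrite [X in (_ + X)%N](eq_bigl (pred1 o)); last first.
    move=> i /=; apply/idP/eqP.
      case/andP=> /andP[h1 _] h2; apply: val_inj => /=; lia.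
    by move=> ->; rewrite /= ltnSn eo ltnn.
  rewrite big_pred1_eq natrD.
  have IHo := IH o eo (leqnn m).
  have Soj : S o < S j by apply: Hord => //=.
  have Coj : C p S o <= S j.
    have : o != j by apply/eqP => E; rewrite E ltxx in Soj.
    move/Hov => [//|]; rewrite /C => h.
    have : 0 <= (p j)%:R :> rat by [].
    lra.
  move: Coj; rewrite /C; lra.
rewrite [X in (_ + X)%N]big_pred0 ?addn0; first by apply: IH => //; lia.
move=> i /=; apply/negbTE; apply/negP => /andP[/andP[h1 h2] h3].
have io : i = o by apply: val_inj => /=; lia.
by rewrite io eo in h2.
Qed.

Theorem corollary3 (n : nat) (p w : 'I_n -> nat) (T1 T2 : nat) (k : int)
  (mu : rat) (S : 'I_n -> rat) (a : 'I_n) :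
  instance_ok p w T1 T2 k mu ->
  good_optimal p w T1 T2 k mu S ->
  first_later p T2 S a ->
  forall j : 'I_n, (a < j)%N -> Spi p j < T2%:R ->
    earlier p T1 S j -> Delta p S j < Delta p S a.
Proof.
move=> [Hp [_ [_ [HT _]]]] [[[[H0 Hov Hav] _] _] [Hord [HordL [HCle _]]]].
move=> [HlA Hmin] j haj HSpi ej.
have T12 : T1%:R < T2%:R :> rat by rewrite ltr_nat.
have Sa_ge : T2%:R <= S a.
  case: (Hav a) => // h; move: HlA; rewrite /later; lra.
set e := fun i : 'I_n => C p S i <= T1%:R.
have Sj_ge := @main_sum n p T1 S H0 Hov Hord j j ej (leqnn j).
have Hnl : forall i : 'I_n, ~~ e i -> ~~ (i < a)%N.
  move=> i nei; apply/negP => hia.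
  have li : later p T2 S i.
    case: (Hav i) => h; first by rewrite /e h in nei.
    rewrite /later /C; have := Hp i; rewrite -(ltr_nat rat) => hp; lra.
  have := HordL i a li HlA hia; have := Hmin i li; lra.
have split_j : (\sum_(i < n | (i < j)%N) p i =
   \sum_(i < n | (i < j)%N && e i) p i + \sum_(i < n | (i < j)%N && ~~ e i) p i)%N.
  exact: bigID.
have split_a : (\sum_(i < n | (i < j)%N) p i =
   \sum_(i < n | (i < a)%N) p i + \sum_(i < n | (i < j)%N && ~~ (i < a)%N) p i)%N.
  rewrite (bigID (fun i : 'I_n => (i < a)%N)) /=; congr (_ + _)%N.
  apply: eq_bigl => i; case: (ltnP i a) => h; rewrite ?andbT ?andbF //.
  by rewrite (ltn_trans h haj).
have Lle : (\sum_(i < n | (i < j)%N && ~~ e i) p i <=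
            \sum_(i < n | (i < j)%N && ~~ (i < a)%N) p i)%N.
  rewrite [X in (X <= _)%N]big_mkcond [X in (_ <= X)%N]big_mkcond /=.
  apply: leq_sum => i _; case: (i < j)%N => //=.
  case ei: (e i) => //=; by rewrite (negbTE (Hnl i (negbT ei))).
have Cpij := @sum_le_split n p j.
have Cpia := @sum_le_split n p a.
move: Lle => /(leq_trans (leqnn _)); rewrite -(ler_nat rat) => Lle.
move: split_j split_a Cpij Cpia => /(congr1 (fun x => x%:R : rat)) sj
  /(congr1 (fun x => x%:R : rat)) sa /(congr1 (fun x => x%:R : rat)) cj
  /(congr1 (fun x => x%:R : rat)) ca.
rewrite !natrD in sj sa cj ca.
have hCj := HCle j ej.
move: HSpi; rewrite /Delta /Spi => HSpi.
have -> : `|C p S j - Cpi p j| = Cpi p j - C p S j.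
  by rewrite ler0_norm ?opprB // subr_le0.
have Hn := ler_norm (C p S a - Cpi p a).
move: Hn hCj Sj_ge Lle sj sa cj ca HSpi Sa_ge; rewrite /e /Cpi /C => *.
lra.
Qed.
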